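(* Let $k$ be a positive definite kernel on a set $\mathcal{X}$ and $k^\Delta$ the induced dueling kernel on $\mathcal{X}^2$. Let $\{(x_i,x'_i,y_i)\}_{i=1}^t$ be an observation set with $y_i\in\{0,1\}$, and let $h_t$ and $k^\Delta_t$ be the predictor and posterior covariance defined in the context. Let $\tilde h_t\sim\mathrm{GP}(h_t,v_t^2k^\Delta_t)$ be a Gaussian process sample on $\mathcal{X}^2$, where $v_t$ is a fixed (deterministic) sequence. Then there exists a function $\tilde f_t$ on $\mathcal{X}$ such that for all $(x,x')\in\mathcal{X}^2$, almost surely, $\tilde h_t(x,x')=\tilde f_t(x)-\tilde f_t(x')$.
   Context: The dueling kernel is $k^\Delta((x_1,x'_1),(x_2,x'_2))=k(x_1,x_2)+k(x'_1,x'_2)-k(x_1,x'_2)-k(x'_1,x_2)$, with RKHS $\mathcal{H}_{k^\Delta}$. With $\mu(u)=(1+e^{-u})^{-1}$ and $\lambda>0$, $h_t=\arg\min_{g\in\mathcal{H}_{k^\Delta}}\sum_{i=1}^t[-y_i\log\mu(g(x_i,x'_i))-(1-y_i)\log(1-\mu(g(x_i,x'_i)))]+\frac{\lambda}{2}\|g\|^2_{\mathcal{H}_{k^\Delta}}$. With $z_i=(x_i,x'_i)$, $k^\Delta_t(z)=[k^\Delta(z,z_j)]_{j=1}^t$, $K^\Delta_t=[k^\Delta(z_i,z_j)]_{i,j}$ and a constant $\kappa>0$, $k^\Delta_t(z,z')=k^\Delta(z,z')-k^\Delta_t(z)^\top(K^\Delta_t+\lambda\kappa I)^{-1}k^\Delta_t(z')$.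 *)

(* Defs.v *)
From HB Require Import structures.
From mathcomp Require Import all_boot all_order all_algebra.
From mathcomp Require Import all_classical all_reals all_analysis.
Set Implicit Arguments. Unset Strict Implicit. Unset Printing Implicit Defensive.
Import Order.TTheory GRing.Theory Num.Theory.
Import numFieldNormedType.Exports.
Local Open Scope classical_set_scope.
Local Open Scope ring_scope.

Section Defs.
Variable R : realType.

Definition pd_kernel (Z : Type) (K : Z -> Z -> R) : Prop :=
  (forall z w, K z w = K w z) /\
  (forall (n : nat) (a : 'I_n -> R) (z : 'I_n -> Z),
      0 <= \sum_(i < n) \sum_(j < n) a i * a j * K (z i) (z j)).

Definition dueling (X : Type) (k : X -> X -> R) (z1 z2 : X * X) : R :=
  k z1.1 z2.1 + k z1.2 z2.2 - k z1.1 z2.2 - k z1.2 z2.1.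

(** RKHS of a kernel K on Z, via the Moore--Aronszajn construction.
    Elements of the pre-Hilbert space: finite combinations sum_p p.1 K(., p.2). *)
Definition pre_eval (Z : Type) (K : Z -> Z -> R) (s : seq (R * Z)) (z : Z) : R :=
  \sum_(p <- s) p.1 * K p.2 z.
Definition pre_ip (Z : Type) (K : Z -> Z -> R) (s t : seq (R * Z)) : R :=
  \sum_(p <- s) \sum_(q <- t) p.1 * q.1 * K p.2 q.2.
Definition pre_sub (Z : Type) (s t : seq (R * Z)) : seq (R * Z) :=
  s ++ map (fun q => (- q.1, q.2)) t.
Definition pre_norm2 (Z : Type) (K : Z -> Z -> R) (s : seq (R * Z)) : R :=
  pre_ip K s s.

Definition rkhs_approx (Z : Type) (K : Z -> Z -> R) (u : nat -> seq (R * Z))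
    (g : Z -> R) : Prop :=
  (forall e : R, 0 < e -> exists N : nat, forall m n : nat, (N <= m)%N -> (N <= n)%N ->
      pre_norm2 K (pre_sub (u m) (u n)) < e) /\
  (forall z, (fun n => pre_eval K (u n) z) @ \oo --> g z).

Definition in_rkhs (Z : Type) (K : Z -> Z -> R) (g : Z -> R) : Prop :=
  exists u, rkhs_approx K u g.

Definition rkhs_norm2 (Z : Type) (K : Z -> Z -> R) (g : Z -> R) (r : R) : Prop :=
  exists u, rkhs_approx K u g /\ (fun n => pre_norm2 K (u n)) @ \oo --> r.

Definition mu (u : R) : R := (1 + expR (- u))^-1.

Definition reg_loss (X : Type) (k : X -> X -> R) (lam : R) (t : nat)
    (xs xs' : 'I_t -> X) (ys : 'I_t -> bool) (g : X * X -> R) (nrm2 : R) : R :=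
  \sum_(i < t) (- (ys i)%:R * ln (mu (g (xs i, xs' i)))
                - (1 - (ys i)%:R) * ln (1 - mu (g (xs i, xs' i))))
  + lam / 2 * nrm2.

Definition is_ht (X : Type) (k : X -> X -> R) (lam : R) (t : nat)
    (xs xs' : 'I_t -> X) (ys : 'I_t -> bool) (h : X * X -> R) : Prop :=
  in_rkhs (dueling k) h /\
  exists rh, rkhs_norm2 (dueling k) h rh /\
    forall g rg, in_rkhs (dueling k) g -> rkhs_norm2 (dueling k) g rg ->
      reg_loss k lam xs xs' ys h rh <= reg_loss k lam xs xs' ys g rg.

Definition post_cov (X : Type) (k : X -> X -> R) (lam kappa : R) (t : nat)
    (xs xs' : 'I_t -> X) (z z' : X * X) : R :=
  let kD := dueling k in
  let zs := fun i => (xs i, xs' i) in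
  let kt := fun w => \col_(j < t) kD w (zs j) in
  let Kt := \matrix_(i < t, j < t) kD (zs i) (zs j) in
  kD z z' - (((kt z)^T *m invmx (Kt + (lam * kappa)%:M) *m kt z') ord0 ord0).

Definition gauss_law (m s2 : R) : set R -> \bar R :=
  if s2 <= 0 then (\d_m : set R -> \bar R) else normal_prob m (Num.sqrt s2).

Definition is_GP (d : measure_display) (Omega : measurableType d)
    (P : probability Omega R) (Z : Type) (F : Omega -> Z -> R)
    (mean : Z -> R) (cov : Z -> Z -> R) : Prop :=
  (forall z, measurable_fun setT (fun w => F w z)) /\
  forall (n : nat) (a : 'I_n -> R) (z : 'I_n -> Z) (A : set R), measurable A ->
    P ((fun w => \sum_(i < n) a i * F w (z i)) @^-1` A) =
    gauss_law (\sum_(i < n) a i * mean (z i))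
              (\sum_(i < n) \sum_(j < n) a i * a j * cov (z i) (z j)) A.

End Defs.

(* Main.v *)
Require Import Defs.
From HB Require Import structures.
From mathcomp Require Import all_boot all_order all_algebra.
From mathcomp Require Import all_classical all_reals all_analysis.
From mathcomp Require Import ring lra.
Import Order.TTheory GRing.Theory Num.Theory.
Import numFieldNormedType.Exports.
Local Open Scope classical_set_scope.
Local Open Scope ring_scope.

Lemma duel2 (R : realType) (X : Type) (k : X -> X -> R) p x x' x0 :
  dueling k p (x, x') = dueling k p (x, x0) - dueling k p (x', x0).
Proof. rewrite /dueling /=; ring. Qed.

Lemma duel1 (R : realType) (X : Type) (k : X -> X -> R) p x x' x0 :
  dueling k (x, x') p = dueling k (x, x0) p - dueling k (x', x0) p.
Proof. rewrite /dueling /=; ring. Qed.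

Lemma pc_lin (R : realType) (X : Type) (k : X -> X -> R) lam kappa t
  (xs xs' : 'I_t -> X) w x x' x0 :
  post_cov k lam kappa xs xs' w (x, x') =
  post_cov k lam kappa xs xs' w (x, x0) - post_cov k lam kappa xs xs' w (x', x0).
Proof.
rewrite /post_cov /=.
set B := (_ *m invmx _).
have e : \col_(j < t) dueling k (x, x') (xs j, xs' j) =
   \col_(j < t) dueling k (x, x0) (xs j, xs' j) - \col_(j < t) dueling k (x', x0) (xs j, xs' j).
  by apply/matrixP => i j; rewrite !mxE (duel1 _ _ _ _ _ _ x0).
rewrite e mulmxBr (duel2 _ _ _ _ _ _ x0) !mxE; ring.
Qed.

Theorem proposition1 (R : realType) (X : Type) (k : X -> X -> R)
  (hk : pd_kernel k) (lam kappa : R) (hlam : 0 < lam) (hkappa : 0 < kappa)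
  (t : nat) (xs xs' : 'I_t -> X) (ys : 'I_t -> bool)
  (h : X * X -> R) (hh : is_ht k lam xs xs' ys h)
  (v : R)
  (d : measure_display) (Omega : measurableType d) (P : probability Omega R)
  (htil : Omega -> X * X -> R)
  (hGP : is_GP P htil h (fun z z' => v ^+ 2 * post_cov k lam kappa xs xs' z z')) :
  exists ftil : Omega -> X -> R,
    forall x x' : X, {ae P, forall w, htil w (x, x') = ftil w x - ftil w x'}.
Proof.
have [[x0 _]|nX] := pselect (exists x : X, True); last first.
  by exists (fun _ _ => 0) => x; exfalso; apply: nX; exists x.
exists (fun w y => htil w (y, x0)) => x x'.
pose a := fun i : 'I_3 => nth (0:R) [:: 1; -1; 1] i.
pose z := fun i : 'I_3 => nth (x, x) [:: (x, x'); (x, x0); (x', x0)] i.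
have hmean : \sum_(i < 3) a i * h (z i) = 0.
  case: hh => [[u [_ hu]] _].
  have E : (fun n => pre_eval (dueling k) (u n) (x, x') - pre_eval (dueling k) (u n) (x, x0)
      + pre_eval (dueling k) (u n) (x', x0)) = (fun _ => 0).
    apply: funext => n; rewrite /pre_eval.
    under eq_bigr do rewrite (duel2 _ _ _ _ _ _ x0).
    rewrite -sumrB -big_split /= big1 // => p _; ring.
  have H : (fun n => pre_eval (dueling k) (u n) (x, x') - pre_eval (dueling k) (u n) (x, x0)
      + pre_eval (dueling k) (u n) (x', x0)) @ \oo --> h (x, x') - h (x, x0) + h (x', x0).
    by apply: cvgD; [apply: cvgB|]; apply: hu.
  rewrite E in H.
  have HH : h (x, x') - h (x, x0) + h (x', x0) = 0.
    by apply: (cvg_unique _ H (cvg_cst 0)); exact: norm_hausdorff.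
  rewrite !big_ord_recr big_ord0 /= /a /z /=.
  rewrite -[X in _ = X]HH; ring.
have hvar : \sum_(i < 3) \sum_(j < 3) a i * a j *
    (v ^+ 2 * post_cov k lam kappa xs xs' (z i) (z j)) = 0.
  apply: big1 => i _.
  rewrite !big_ord_recr big_ord0 /= /a /z /=.
  rewrite (pc_lin _ _ _ _ _ _ _ _ _ _ _ x0); ring.
have Ef : (fun w => \sum_(i < 3) a i * htil w (z i)) =
    (fun w => htil w (x, x') - htil w (x, x0) + htil w (x', x0)).
  apply: funext => w; rewrite !big_ord_recr big_ord0 /= /a /z /=; ring.
have mf : measurable_fun setT (fun w => \sum_(i < 3) a i * htil w (z i)).
  rewrite Ef; apply: measurable_realfun.measurable_funD; [apply: measurable_realfun.measurable_funB|]; exact: hGP.1.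
exists ((fun w => \sum_(i < 3) a i * htil w (z i)) @^-1` (~` [set 0])); split.
- rewrite -[X in measurable X]setTI; apply: mf => //.
  exact/measurableC.
- rewrite hGP.2; last exact/measurableC.
  rewrite hmean hvar /gauss_law lexx diracE.
  by rewrite memNset //= ; apply/negP; rewrite notin_setE /=; apply. 
- move=> w /= Hw; rewrite (congr1 (fun f => f w) Ef) /= => H0; apply: Hw.
  by apply/eqP; rewrite -subr_eq0; apply/eqP; rewrite -H0; ring.
Qed.
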